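(* Let $n$ be a positive integer such that $0.2n$, $0.45n$, $0.35n$ are integers. Consider the population of $n$ users consisting of $0.2n$ users with speech point $2$ and interval $[2,4]$, $0.45n$ users with speech point $3$ and interval $[2,3]$, and $0.35n$ users with speech point $4$ and interval $[3,4]$, all with participation threshold $\theta_i=2/3$, and no moderation window (no user banned). Then there is no stable set of users: for every $\mathcal S\subseteq[n]$, either some $i\in\mathcal S$ has negative utility with respect to $\mathcal S$ or some $j\notin\mathcal S$ has nonnegative utility with respect to $\mathcal S$.
   Context: For a set $\mathcal S$ of users on the platform, user $i$ (with interval $[l_i,r_i]$ and threshold $\theta_i$) has nonnegative utility with respect to $\mathcal S$ iff $|\{j\in\mathcal S\setminus\{i\}:p_j\in[l_i,r_i]\}|\ge\theta_i|\mathcal S\setminus\{i\}|$ (in particular utility is nonnegative when $\mathcal S\setminus\{i\}=\emptyset$), and negative otherwise. A set $\mathcal S$ is stable if all $i\in\mathcal S$ have nonnegative utility with respect to $\mathcal S$ and all $j\notin\mathcal S$ have negative utility with respect to $\mathcal S$. *)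

(* Defs.v *)
From mathcomp Require Import all_boot all_order all_algebra.
Set Implicit Arguments. Unset Strict Implicit. Unset Printing Implicit Defensive.
Import Order.TTheory GRing.Theory Num.Theory.
Local Open Scope ring_scope.

Definition others (n : nat) (S : {set 'I_n}) (i : 'I_n) : {set 'I_n} := S :\ i.

Definition nonneg_utility (n : nat) (p l r theta : 'I_n -> rat)
    (S : {set 'I_n}) (i : 'I_n) : bool :=
  theta i * (#|others S i|)%:R <=
    (#|[set j in others S i | (l i <= p j) && (p j <= r i)]|)%:R.

Definition stable (n : nat) (p l r theta : 'I_n -> rat) (S : {set 'I_n}) : Prop :=
  (forall i, i \in S -> nonneg_utility p l r theta S i) /\
  (forall j, j \notin S -> ~~ nonneg_utility p l r theta S j).

(* Main.v *)
Require Import Defs.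
From mathcomp Require Import all_boot all_order all_algebra zify lra.
Import Order.TTheory GRing.Theory Num.Theory.
Local Open Scope ring_scope.
Set Implicit Arguments. Unset Strict Implicit.

Definition Ty {n : nat} (p l r : 'I_n -> rat) :=
  forall i, [\/ p i = 2 /\ l i = 2 /\ r i = 4,
                 p i = 3 /\ l i = 2 /\ r i = 3 |
                 p i = 4 /\ l i = 3 /\ r i = 4].

Lemma part n (p l r : 'I_n -> rat) (h : Ty p l r) (X : {set 'I_n}) :
  #|X| = addn (addn #|X :&: [set i | p i == 2]| #|X :&: [set i | p i == 3]|)
          #|X :&: [set i | p i == 4]|.
Proof.
rewrite -(cardsID [set i | p i == 2] X) -(cardsID [set i | p i == 3] (X :\: _)).
have -> : (X :\: [set i | p i == 2]) :&: [set i | p i == 3] = X :&: [set i | p i == 3].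
  by apply/setP => j; rewrite !inE; case: (h j) => [[-> _]|[-> _]|[-> _]]; rewrite ?andbF ?andbT.
have -> : (X :\: [set i | p i == 2]) :\: [set i | p i == 3] = X :&: [set i | p i == 4].
  by apply/setP => j; rewrite !inE; case: (h j) => [[-> _]|[-> _]|[-> _]]; rewrite ?andbF ?andbT.
by rewrite addnA.
Qed.

Lemma filtI n (p l r : 'I_n -> rat) (h : Ty p l r) (X : {set 'I_n}) i (k : rat) :
  (k == 2) || (k == 3) || (k == 4) ->
  [set j in X | (l i <= p j) && (p j <= r i)] :&: [set j | p j == k] =
  if (l i <= k) && (k <= r i) then X :&: [set j | p j == k] else set0.
Proof.
move=> hk; apply/setP => j; rewrite !inE.
case: ifP => c; rewrite !inE; case: (eqVneq (p j) k) => [->|ne];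
  rewrite ?eqxx ?(negbTE ne) ?c ?andbT ?andbF //.
Qed.

Lemma filt n (p l r : 'I_n -> rat) (h : Ty p l r) (X : {set 'I_n}) i :
 #|[set j in X | (l i <= p j) && (p j <= r i)]| =
  if p i == 2 then #|X| else if p i == 3 then
   addn #|X :&: [set j | p j == 2]| #|X :&: [set j | p j == 3]|
  else addn #|X :&: [set j | p j == 3]| #|X :&: [set j | p j == 4]|.
Proof.
rewrite (part h) !(filtI h) //.
by case: (h i) => [[-> [-> ->]]|[-> [-> ->]]|[-> [-> ->]]] /=; rewrite ?cards0 ?addn0 ?(part h X).
Qed.

Lemma in_ineq n (p l r theta : 'I_n -> rat) (S : {set 'I_n}) i :
  theta i = 2/3 -> i \in S -> nonneg_utility p l r theta S i ->
  (2 * (#|S| - 1) <= 3 * #|[set j in S :\ i | (l i <= p j)%R && (p j <= r i)%R]|)%N.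
Proof.
rewrite /nonneg_utility /others => -> iS.
have -> : #|S :\ i| = (#|S| - 1)%N by rewrite (cardsD1 i S) iS add1n subn1.
move=> H; rewrite -(ler_nat rat) !natrM; lra.
Qed.

Lemma out_ineq n (p l r theta : 'I_n -> rat) (S : {set 'I_n}) i :
  theta i = 2/3 -> i \notin S -> ~~ nonneg_utility p l r theta S i ->
  (3 * #|[set j in S | (l i <= p j)%R && (p j <= r i)%R]| < 2 * #|S|)%N.
Proof.
rewrite /nonneg_utility /others => -> iS.
have -> : S :\ i = S.
  by apply/setP => j; rewrite !inE; case: eqVneq => // ->; rewrite (negbTE iS).
rewrite -ltNge => H; rewrite -(ltr_nat rat) !natrM; lra.
Qed.

Lemma D1I n (S Q : {set 'I_n}) i :
  #|(S :\ i) :&: Q| = (#|S :&: Q| - (i \in S :&: Q))%N.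
Proof.
have -> : (S :\ i) :&: Q = (S :&: Q) :\ i by apply/setP => j; rewrite !inE andbA.
by rewrite (cardsD1 i (S :&: Q)) addKn.
Qed.

Unset Implicit Arguments.

Theorem proposition12 (n : nat) (p l r theta : 'I_n -> rat) :
  (0 < n)%N ->
  (exists a b c : nat, a%:R = (1/5 : rat) * n%:R /\ b%:R = (9/20 : rat) * n%:R /\
                        c%:R = (7/20 : rat) * n%:R) ->
  (forall i, theta i = 2/3) ->
  (forall i, [\/ p i = 2 /\ l i = 2 /\ r i = 4,
                 p i = 3 /\ l i = 2 /\ r i = 3 |
                 p i = 4 /\ l i = 3 /\ r i = 4]) ->
  #|[set i | p i == 2]|%:R = (1/5 : rat) * n%:R ->
  #|[set i | p i == 3]|%:R = (9/20 : rat) * n%:R ->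
  #|[set i | p i == 4]|%:R = (7/20 : rat) * n%:R ->
  forall S : {set 'I_n}, ~ stable p l r theta S.
Proof.
move=> n0 _ hth hty h2 h3 h4 S [hin hout].
have e2 : (5 * #|[set i | p i == 2%R]| = n)%N.
  by apply/eqP; rewrite -(eqr_nat rat) natrM h2; apply/eqP; lra.
have e3 : (20 * #|[set i | p i == 3%R]| = 9 * n)%N.
  by apply/eqP; rewrite -(eqr_nat rat) !natrM h3; apply/eqP; lra.
have e4 : (20 * #|[set i | p i == 4%R]| = 7 * n)%N.
  by apply/eqP; rewrite -(eqr_nat rat) !natrM h4; apply/eqP; lra.
have allA : forall j, p j = 2 -> j \in S.
  move=> j pj; apply/negPn/negP => jS; move: (hout j jS).
  rewrite /nonneg_utility (filt hty) pj eqxx hth.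
  have : 0 <= (#|others S j|)%:R :> rat by apply: ler0n.
  move=> ? /negP; apply; lra.
have x2 : S :&: [set i | p i == 2] = [set i | p i == 2].
  by apply/setP => j; rewrite !inE; case: (eqVneq (p j) 2) => [/allA ->|_]; rewrite ?andbF.
have hN := part hty S.
have s3 : (#|S :&: [set i | p i == 3%R]| <= #|[set i | p i == 3%R]|)%N.
  by apply: subset_leq_card; apply: subsetIr.
have s4 : (#|S :&: [set i | p i == 4%R]| <= #|[set i | p i == 4%R]|)%N.
  by apply: subset_leq_card; apply: subsetIr.
have Bin : (0 < #|S :&: [set i | p i == 3%R]|)%N ->
   (2 * (#|S| - 1) <= 3 * (#|S :&: [set i | p i == 2%R]| + (#|S :&: [set i | p i == 3%R]| - 1)))%N.
  rewrite card_gt0 => /set0Pn [i]; rewrite !inE => /andP [iS /eqP pi].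
  have := in_ineq (hth i) iS (hin i iS).
  by rewrite (filt hty) pi /= !D1I !inE iS pi /= subn0.
have Cin : (0 < #|S :&: [set i | p i == 4%R]|)%N ->
   (2 * (#|S| - 1) <= 3 * (#|S :&: [set i | p i == 3%R]| + (#|S :&: [set i | p i == 4%R]| - 1)))%N.
  rewrite card_gt0 => /set0Pn [i]; rewrite !inE => /andP [iS /eqP pi].
  have := in_ineq (hth i) iS (hin i iS).
  by rewrite (filt hty) pi /= !D1I !inE iS pi /= subn0.
have Bout : (#|S :&: [set i | p i == 3%R]| < #|[set i | p i == 3%R]|)%N ->
   (3 * (#|S :&: [set i | p i == 2%R]| + #|S :&: [set i | p i == 3%R]|) < 2 * #|S|)%N.
  move=> lt; have : (0 < #|[set i | p i == 3%R] :\: S|)%N.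
    have hc := cardsID S [set i | p i == 3%R]; rewrite setIC in hc; move: lt; rewrite -hc; case: #|_ :\: S| => [|k]; rewrite ?addn0 ?ltnn //.
  rewrite card_gt0 => /set0Pn [i]; rewrite !inE => /andP [iS /eqP pi].
  have := out_ineq (hth i) iS (hout i iS).
  by rewrite (filt hty) pi /=.
have Cout : (#|S :&: [set i | p i == 4%R]| < #|[set i | p i == 4%R]|)%N ->
   (3 * (#|S :&: [set i | p i == 3%R]| + #|S :&: [set i | p i == 4%R]|) < 2 * #|S|)%N.
  move=> lt; have : (0 < #|[set i | p i == 4%R] :\: S|)%N.
    have hc := cardsID S [set i | p i == 4%R]; rewrite setIC in hc; move: lt; rewrite -hc; case: #|_ :\: S| => [|k]; rewrite ?addn0 ?ltnn //.
  rewrite card_gt0 => /set0Pn [i]; rewrite !inE => /andP [iS /eqP pi].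
  have := out_ineq (hth i) iS (hout i iS).
  by rewrite (filt hty) pi /=.
rewrite x2 in hN Bin Bout.
set a2 := #|[set i | p i == 2%R]| in e2 hN Bin Bout.
set a3 := #|[set i | p i == 3%R]| in e3 s3 Bout.
set a4 := #|[set i | p i == 4%R]| in e4 s4 Cout.
set y := #|S :&: [set i | p i == 3%R]| in hN s3 Bin Cin Bout Cout.
set z := #|S :&: [set i | p i == 4%R]| in hN s4 Cin Cout.
set N := #|S| in hN Bin Cin Bout Cout.
lia.
Qed.
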